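(* Let $F$ be a field and let $M$ be a root-closed Puiseux monoid. Then $F[M]$ is a U-UFD: whenever $g_1\cdots g_k=h_1\cdots h_\ell$ with all $g_i,h_j$ irreducible in $F[M]$, one has $k=\ell$ and there is a permutation $\sigma$ of $\{1,\dots,k\}$ such that $g_i$ and $h_{\sigma(i)}$ are associates for every $i$.
   Context: A Puiseux monoid is an additive submonoid of $(\mathbb{Q}_{\ge 0},+)$; $F[M]$ is its semigroup algebra over $F$ (finite formal sums $\sum_{s\in M} f(s)X^s$ with $X^sX^t=X^{s+t}$), an integral domain with units $F^\times$. $\mathsf{gp}(M)=\{x-y\mid x,y\in M\}$; $x\in\mathsf{gp}(M)$ is a root element if $nx\in M$ for some $n\in\mathbb{N}$; $M$ is root-closed if all root elements lie in $M$. An integral domain is an unrestricted unique factorization domain (U-UFD) if every element that admits a factorization into irreducibles has a unique such factorization up to order and associates. *)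

(* Defs.v *)
From HB Require Import structures.
From mathcomp Require Import all_boot all_order all_algebra.
Set Implicit Arguments. Unset Strict Implicit. Unset Printing Implicit Defensive.
Import Order.TTheory GRing.Theory Num.Theory.
Local Open Scope ring_scope.

Definition puiseux_monoid (M : rat -> Prop) : Prop :=
  [/\ M 0, (forall x y, M x -> M y -> M (x + y)) & (forall x, M x -> 0 <= x)].

Definition in_gp (M : rat -> Prop) (x : rat) : Prop :=
  exists a b, [/\ M a, M b & x = a - b].

Definition root_element (M : rat -> Prop) (x : rat) : Prop :=
  in_gp M x /\ exists n : nat, (0 < n)%N /\ M (x *+ n).

Definition root_closed (M : rat -> Prop) : Prop :=
  forall x, root_element M x -> M x.

(* An element of F[M] is represented by a finite list of terms
   (exponent, coefficient), i.e. the formal sum  sum_t t.2 X^(t.1),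
   all of whose exponents lie in M.  Two representations denote the same
   element iff they have the same coefficient function. *)
Section SemigroupAlgebra.
Variable F : fieldType.

Definition fm := seq (rat * F).

Definition fm_coef (p : fm) (q : rat) : F := \sum_(t <- p | t.1 == q) t.2.

Definition in_FM (M : rat -> Prop) (p : fm) : Prop :=
  forall t, t \in p -> M t.1.

Definition fm_eq (p q : fm) : Prop := forall x, fm_coef p x = fm_coef q x.

Definition fm_zero : fm := [::].
Definition fm_one : fm := [:: (0, 1)].

(* X^a X^b = X^(a+b), extended bilinearly *)
Definition fm_mul (p q : fm) : fm :=
  [seq (a.1 + b.1, a.2 * b.2) | a <- p, b <- q].

Definition fm_prod (s : seq fm) : fm := foldr fm_mul fm_one s.

Definition fm_unit (M : rat -> Prop) (p : fm) : Prop :=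
  in_FM M p /\ exists q, in_FM M q /\ fm_eq (fm_mul p q) fm_one.

Definition fm_irreducible (M : rat -> Prop) (p : fm) : Prop :=
  [/\ in_FM M p, ~ fm_eq p fm_zero, ~ fm_unit M p &
      forall g h, in_FM M g -> in_FM M h -> fm_eq p (fm_mul g h) ->
        fm_unit M g \/ fm_unit M h].

Definition fm_associated (M : rat -> Prop) (p q : fm) : Prop :=
  exists u, fm_unit M u /\ fm_eq p (fm_mul u q).

End SemigroupAlgebra.

(* Main.v *)
Require Import Defs.
From HB Require Import structures.
From mathcomp Require Import all_boot all_order all_algebra.
From mathcomp Require Import ring.
From Stdlib Require Import Classical.
Import Order.TTheory GRing.Theory Num.Theory.
Local Open Scope ring_scope.

Module AuxP1.

Lemma irr_dvd_prod (F : fieldType) (p : {poly F}) n (h : 'I_n -> {poly F}) :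
  irreducible_poly p -> p %| \prod_(j < n) h j -> exists j, p %| h j.
Proof.
move=> ip; elim: n h => [|n IH] h.
  rewrite big_ord0 dvdp1 => /eqP s1.
  by case: ip; rewrite s1.
rewrite big_ord_recl => hd.
have [d0|nd0] := boolP (p %| h ord0); first by exists ord0.
have cp : coprimep p (h ord0) by rewrite irreducible_poly_coprime.
rewrite Gauss_dvdpr // in hd.
by have [j hj] := IH _ hd; exists (lift ord0 j).
Qed.

Lemma poly_ufd (F : fieldType) k l (g : 'I_k -> {poly F}) (h : 'I_l -> {poly F}) :
 (forall i, irreducible_poly (g i)) -> (forall j, irreducible_poly (h j)) ->
 \prod_i g i %= \prod_j h j ->
 k = l /\ exists sigma : 'I_k -> 'I_l, bijective sigma /\ forall i, g i %= h (sigma i).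
Proof.
elim: k l g h => [|k IH] l g h ig ih.
  rewrite big_ord0 => e.
  case: l h ih e => [|l] h ih e.
    split=> //; exists id; split; [exact: injF_bij | by case].
  exfalso.
  have : h ord0 %| 1.
    rewrite (eqp_dvdr _ e) big_ord_recl; exact: dvdp_mulr (dvdpp (h ord0)).
  rewrite dvdp1 => /eqP s1; by case: (ih ord0); rewrite s1.
move=> e.
have : g ord0 %| \prod_j h j by rewrite -(eqp_dvdr _ e) big_ord_recl dvdp_mulr ?dvdpp.
move=> /(@irr_dvd_prod _ _ _ _ (ig ord0)) [j0 dj0].
have a0 : g ord0 %= h j0.
  apply: (apply_irredp (ih j0) _ dj0).
  by case: (ig ord0) => s _; apply/eqP => s1; rewrite s1 in s.
case: l h ih e j0 dj0 a0 => [|l] h ih e j0; first by case: j0.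
move=> dj0 a0.
rewrite big_ord_recl (bigD1_ord j0) //= in e.
have e' : \prod_(i < k) g (lift ord0 i) %= \prod_(i < l) h (lift j0 i).
  rewrite -(eqp_mul2l _ _ (irredp_neq0 (ig ord0))).
  apply: eqp_trans e _.
  rewrite eqp_mul2r; first by rewrite eqp_sym.
  by rewrite prodf_seq_neq0; apply/allP => x _; exact: irredp_neq0.
have [kl [s' [bs' hs']]] := IH l _ _ (fun i => ig _) (fun j => ih _) e'.
subst l; split=> //.
pose sigma (i : 'I_k.+1) := if unlift ord0 i is Some i' then lift j0 (s' i') else j0.
exists sigma; split.
  apply: injF_bij => i1 i2; rewrite /sigma.
  case: (unliftP ord0 i1) => [i1'|] -> ; case: (unliftP ord0 i2) => [i2'|] -> //.
  - by move/lift_inj/(bij_inj bs') => ->.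
  - by move/esym/eqP; rewrite (negbTE (neq_lift _ _)).
  - by move/eqP; rewrite (negbTE (neq_lift _ _)).
move=> i; rewrite /sigma; case: (unliftP ord0 i) => [i'|] -> //.
Qed.

End AuxP1.
Import AuxP1.

Module Aux.
Set Implicit Arguments. Unset Strict Implicit. Unset Printing Implicit Defensive.

Section Phi.
Variable F : fieldType.
Variable c : rat.
Hypothesis c_gt0 : 0 < c.

Definition cov (p : fm F) := forall t, t \in p -> exists n : nat, t.1 = c * n%:R.
Definition idx (x : rat) : nat := Num.trunc (x / c).
Definition phi (p : fm F) : {poly F} := \sum_(t <- p) t.2 *: 'X^(idx t.1).
Definition psi (A : {poly F}) : fm F := [seq (c * i%:R, A`_i) | i <- index_iota 0 (size A)].

Lemma c_neq0 : c != 0. Proof. by rewrite gt_eqF. Qed.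

Lemma idx_nat n : idx (c * n%:R) = n.
Proof.
rewrite /idx [c * _]mulrC mulfK ?c_neq0 //; apply: truncn_def.
by rewrite lexx ltr_nat ltnSn.
Qed.

Lemma cmul_inj m n : (c * m%:R == c * n%:R) = (m == n).
Proof. by rewrite (inj_eq (mulfI c_neq0)) eqr_nat. Qed.

Lemma fm_coefE (p : fm F) x : fm_coef p x = \sum_(t <- p) (if t.1 == x then t.2 else 0).
Proof. by rewrite /fm_coef big_mkcond. Qed.

Lemma coef_phi p n : cov p -> (phi p)`_n = fm_coef p (c * n%:R).
Proof.
move=> cp; rewrite /phi coef_sum fm_coefE; apply: eq_big_seq => t tp.
have [m ->] := cp t tp.
rewrite coefZ coefXn idx_nat cmul_inj.
rewrite mulr_natr; have [e|ne] := eqVneq m n; first by subst m; rewrite mulr1n.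
by rewrite mulr0n.
Qed.

Lemma coef_off p x : cov p -> ~~ (x / c \is a Num.nat) -> fm_coef p x = 0.
Proof.
move=> cp nx; rewrite fm_coefE big1_seq // => t /andP [_ tp].
have [m tm] := cp t tp; case: eqP => // e.
by move: nx; rewrite -e tm [c * _]mulrC mulfK ?c_neq0 // natr_nat.
Qed.

Lemma phi_eq p q : cov p -> cov q -> fm_eq p q <-> phi p = phi q.
Proof.
move=> cp cq; split => [e|e x].
  by apply/polyP => n; rewrite !coef_phi.
have [xn|xn] := boolP (x / c \is a Num.nat); last by rewrite !coef_off.
have -> : x = c * (Num.trunc (x / c))%:R.
  by rewrite (truncnK xn) mulrC divfK ?c_neq0.
by rewrite -!coef_phi // e.
Qed.

Lemma cov_mul p q : cov p -> cov q -> cov (fm_mul p q).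
Proof.
move=> cp cq t /allpairsP [[a b] [/= ap bq ->]] /=.
have [m ->] := cp a ap; have [n ->] := cq b bq.
by exists (m + n)%N; rewrite natrD mulrDr.
Qed.

Lemma phi_mul p q : cov p -> cov q -> phi (fm_mul p q) = phi p * phi q.
Proof.
move=> cp cq; rewrite /phi /fm_mul big_allpairs_dep /= mulr_suml.
apply: eq_big_seq => a ap; rewrite mulr_sumr; apply: eq_big_seq => b bq /=.
have [m am] := cp a ap; have [n bn] := cq b bq.
rewrite am bn -mulrDr -natrD !idx_nat exprD -scalerAl -scalerAr scalerA.
by rewrite mulrC.
Qed.

Lemma cov_one : cov (fm_one F).
Proof. by move=> t; rewrite inE => /eqP -> /=; exists 0%N; rewrite mulr0. Qed.

Lemma phi_one : phi (fm_one F) = 1.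
Proof.
rewrite /phi big_cons big_nil addr0 /=.
have -> : (0 : rat) = c * 0%:R by rewrite mulr0.
by rewrite idx_nat expr0 scale1r.
Qed.

Lemma cov_prod (s : seq (fm F)) : (forall p, p \in s -> cov p) -> cov (fm_prod s).
Proof.
elim: s => [|p s IH] cs /=; first exact: cov_one.
apply: cov_mul; first by apply: cs; rewrite inE eqxx.
by apply: IH => q qs; apply: cs; rewrite inE qs orbT.
Qed.

Lemma phi_prod (s : seq (fm F)) : (forall p, p \in s -> cov p) ->
  phi (fm_prod s) = \prod_(p <- s) phi p.
Proof.
elim: s => [|p s IH] cs /=; first by rewrite big_nil phi_one.
have cs' : forall q, q \in s -> cov q by move=> q qs; apply: cs; rewrite inE qs orbT.
rewrite big_cons phi_mul ?IH //; first by apply: cs; rewrite inE eqxx.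
exact: cov_prod.
Qed.

Lemma cov_psi A : cov (psi A).
Proof. by move=> t /mapP [i _ ->]; exists i. Qed.

Lemma phi_psi A : phi (psi A) = A.
Proof.
rewrite /phi /psi big_map big_mkord /=.
rewrite -[RHS]coefK poly_def; apply: eq_bigr => i _.
by rewrite idx_nat.
Qed.

Lemma cov_const a : cov [:: (0, a)].
Proof. by move=> t; rewrite inE => /eqP -> /=; exists 0%N; rewrite mulr0. Qed.

Lemma phi_const a : phi [:: (0, a)] = a%:P.
Proof.
rewrite /phi big_cons big_nil addr0 /=.
have -> : (0 : rat) = c * 0%:R by rewrite mulr0.
by rewrite idx_nat expr0 alg_polyC.
Qed.

End Phi.


Lemma nat_num (z : int) : 0 <= z -> ((`|z|%N)%:R : rat) = z%:~R.
Proof. by move=> z0; rewrite -{2}(gez0_abs z0) pmulrn. Qed.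

Lemma common_den (xs : seq rat) : (forall x, x \in xs -> 0 <= x) ->
  exists D : nat, (0 < D)%N /\ forall x, x \in xs -> exists n : nat, x = n%:R / D%:R.
Proof.
elim: xs => [|x xs IH] hx; first by exists 1%N.
have [D' [D'0 hD']] : exists D : nat, (0 < D)%N /\ forall y, y \in xs -> exists n : nat, y = n%:R / D%:R.
  by apply: IH => y ys; apply: hx; rewrite inE ys orbT.
have x0 : 0 <= x by apply: hx; rewrite inE eqxx.
pose d := `|denq x|%N; pose n0 := `|numq x|%N.
have d0 : (0 < d)%N by rewrite absz_gt0 gt_eqF ?denq_gt0.
have dE : (d%:R : rat) = (denq x)%:~R by rewrite nat_num // ltW // denq_gt0.
have nE : (n0%:R : rat) = (numq x)%:~R by rewrite nat_num // numq_ge0.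
have D'n0 : (D'%:R : rat) != 0 by rewrite pnatr_eq0 -lt0n.
have dn0 : (d%:R : rat) != 0 by rewrite pnatr_eq0 -lt0n.
exists (D' * d)%N; split; first by rewrite muln_gt0 D'0.
move=> y; rewrite inE => /orP [/eqP ->|ys].
  exists (n0 * D')%N; rewrite !natrM -{1}[x]divq_num_den -nE -dE.
  by field; apply/andP; split.
have [n ->] := hD' y ys; exists (n * d)%N.
by rewrite !natrM; field; apply/andP; split.
Qed.

Section Gp.
Variable M : rat -> Prop.
Hypothesis hM : puiseux_monoid M.

Lemma M0 : M 0. Proof. by case: hM. Qed.
Lemma MD x y : M x -> M y -> M (x + y). Proof. by case: hM => _ h _; apply: h. Qed.
Lemma Mge0 x : M x -> 0 <= x. Proof. by case: hM => _ _ h; apply: h. Qed.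

Lemma gpM x : M x -> in_gp M x.
Proof. by move=> Mx; exists x, 0; rewrite subr0; split=> //; exact: M0. Qed.

Lemma gpD x y : in_gp M x -> in_gp M y -> in_gp M (x + y).
Proof.
move=> [a [b [Ma Mb ->]]] [a' [b' [Ma' Mb' ->]]].
exists (a + a'), (b + b'); split; try exact: MD.
by rewrite opprD addrACA.
Qed.

Lemma gpN x : in_gp M x -> in_gp M (- x).
Proof. by move=> [a [b [Ma Mb ->]]]; exists b, a; split=> //; rewrite opprB. Qed.

Lemma gpMn x n : in_gp M x -> in_gp M (x * n%:R).
Proof.
move=> gx; elim: n => [|n IH]; first by rewrite mulr0; apply: gpM; exact: M0.
by rewrite -addn1 natrD mulrDr mulr1; apply: gpD.
Qed.

Lemma MMn x n : M x -> M (x * n%:R).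
Proof.
move=> Mx; elim: n => [|n IH]; first by rewrite mulr0; exact: M0.
by rewrite -addn1 natrD mulrDr mulr1; apply: MD.
Qed.

End Gp.

Lemma ex_min (P : nat -> Prop) n : P n -> exists m, P m /\ forall k, P k -> (m <= k)%N.
Proof.
elim: n {-2}n (leqnn n) => [|N IH] n le Pn.
  by exists n; split=> // k _; move: le; rewrite leqn0 => /eqP ->.
case: (classic (exists k, P k /\ (k < n)%N)) => [[k [Pk lt]]|no].
  by apply: (IH k) => //; rewrite -ltnS (leq_trans lt le).
exists n; split=> // k Pk; rewrite leqNgt; apply/negP => lt; apply: no; by exists k.
Qed.


Section Units.
Variable F : fieldType.
Variable M : rat -> Prop.
Hypothesis hM : puiseux_monoid M.

Lemma cov_exists (ps : seq (fm F)) : (forall p t, p \in ps -> t \in p -> 0 <= t.1) ->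
  exists c, 0 < c /\ forall p, p \in ps -> cov c p.
Proof.
move=> h0.
have hx0 : forall x, x \in [seq t.1 | t <- flatten ps] -> 0 <= x.
  by move=> x /mapP [t /flattenP [p pp tp] ->]; exact: h0 tp.
have [D [D0 hD]] := common_den hx0.
exists (D%:R^-1); split; first by rewrite invr_gt0 ltr0n.
  move=> p pp t tp.
  have : t.1 \in [seq t.1 | t <- flatten ps] by apply: map_f; apply/flattenP; exists p.
by move/hD => [n ->]; exists n; rewrite mulrC.
Qed.

Lemma inFM_ge0 (p : fm F) t : in_FM M p -> t \in p -> 0 <= t.1.
Proof. by move=> hp tp; apply: (Mge0 hM); apply: hp. Qed.

Lemma phi_zero c : phi c (fm_zero F) = 0.
Proof. by rewrite /phi big_nil. Qed.

Lemma L_zero c (c0 : 0 < c) (p : fm F) : cov c p -> phi c p = 0 -> fm_eq p (fm_zero F).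
Proof. by move=> cp e; apply/(phi_eq c0 cp) => //; rewrite e phi_zero. Qed.

Lemma inFM_const (a : F) : in_FM M [:: (0, a)].
Proof. by move=> t; rewrite inE => /eqP ->; exact: (M0 hM). Qed.

Lemma L_unit c (c0 : 0 < c) (p : fm F) a : cov c p -> in_FM M p -> phi c p = a%:P -> a != 0 ->
  fm_unit M p.
Proof.
move=> cp Mp e a0; split=> //; exists [:: (0, a^-1)]; split; first exact: inFM_const.
apply/(phi_eq c0); first by apply: cov_mul => //; exact: cov_const.
  exact: cov_one.
rewrite phi_mul //; last exact: cov_const.
rewrite e phi_const // phi_one.
have -> : a%:P * (a^-1)%:P = (a * a^-1)%:P :> {poly F} by rewrite polyCM.
by rewrite mulfV.
exact: c0.
Qed.

Lemma unit_const (p : fm F) : fm_unit M p -> exists a, a != 0 /\ fm_eq p [:: (0, a)].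
Proof.
move=> [Mp [q [Mq e]]].
have h0 : forall r t, r \in [:: p; q] -> t \in r -> 0 <= t.1.
  move=> r t; rewrite !inE => /orP [/eqP ->|/eqP ->] ht; exact: inFM_ge0 ht.
have [c [c0 hc]] := @cov_exists [:: p; q] h0.
have cp : cov c p by apply: hc; rewrite inE eqxx.
have cq : cov c q by apply: hc; rewrite !inE eqxx orbT.
have e' : phi c p * phi c q = 1.
  rewrite -phi_mul // -(phi_one F c0); apply/(phi_eq c0) => //.
    exact: cov_mul.
  exact: cov_one.
have : phi c p \is a GRing.unit by apply/unitrPr; exists (phi c q).
rewrite poly_unitE => /andP [/eqP s1 u0].
exists (phi c p)`_0; split; first by rewrite -unitfE.
apply/(phi_eq c0) => //; first exact: cov_const.
by rewrite phi_const // -size1_polyC // s1.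
Qed.

Lemma L_const (p : fm F) : in_FM M p -> (forall t, t \in p -> t.1 = 0) -> ~ fm_irreducible M p.
Proof.
move=> Mp hz [_ nz nu _].
have c0 : (0 : rat) < 1 by [].
have cp : cov 1 p by move=> t tp; exists 0%N; rewrite hz // mulr0.
have e : phi 1 p = (\sum_(t <- p) t.2)%:P.
  rewrite /phi rmorph_sum; apply: eq_big_seq => t tp.
  have -> : t.1 = 1 * 0%:R by rewrite hz // mulr0.
  by rewrite idx_nat // expr0 alg_polyC.
have [a0|an0] := eqVneq (\sum_(t <- p) t.2) 0.
  by apply: nz; apply: (L_zero c0 cp); rewrite e a0.
by apply: nu; apply: (L_unit c0 cp Mp e an0).
Qed.

Lemma irr_transfer c (c0 : 0 < c) (p : fm F) : (forall n : nat, M (c * n%:R)) -> cov c p ->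
  fm_irreducible M p -> irreducible_poly (phi c p).
Proof.
move=> Mc cp [Mp nz nu hirr].
have inpsi (A : {poly F}) : in_FM M (psi c A) by move=> t /mapP [i _ ->]; exact: Mc.
split.
  rewrite ltnNge; apply/negP => /size1_polyC e.
  have [a0|an0] := eqVneq (phi c p)`_0 0.
    by apply: nz; apply: (L_zero c0 cp); rewrite e a0.
  by apply: nu; apply: (L_unit c0 cp Mp e an0).
move=> q sq /dvdpP [r e].
have : fm_eq p (fm_mul (psi c r) (psi c q)).
  apply/(phi_eq c0) => //; first by apply: cov_mul; exact: cov_psi.
  rewrite phi_mul //; try exact: cov_psi. by rewrite e !(phi_psi c0).
move=> /(hirr _ _ (inpsi r) (inpsi q)) [] /unit_const [a [a0 ea]].
  move/(phi_eq c0 (@cov_psi _ c _) (@cov_const _ c _)): ea.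
  rewrite (phi_psi c0) phi_const // => er.
  by rewrite e er mul_polyC eqp_sym eqp_scale.
move/(phi_eq c0 (@cov_psi _ c _) (@cov_const _ c _)): ea.
rewrite (phi_psi c0) phi_const // => eq.
by move: sq; rewrite eq size_polyC a0.
Qed.

End Units.

End Aux.
Import Aux.


Lemma phi_prod_ord (F : fieldType) c (c0 : 0 < c) k (g : 'I_k -> fm F) :
  (forall i, cov c (g i)) ->
  phi c (fm_prod (map g (enum 'I_k))) = \prod_i phi c (g i).
Proof.
move=> cg; rewrite phi_prod //; first by rewrite big_map enumT.
by move=> p /mapP [i _ ->].
Qed.

Lemma cov_prod_ord (F : fieldType) c k (g : 'I_k -> fm F) :
  (forall i, cov c (g i)) -> cov c (fm_prod (map g (enum 'I_k))).
Proof. by move=> cg; apply: cov_prod => p /mapP [i _ ->]. Qed.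

Theorem mainTheorem17 (F : fieldType) (M : rat -> Prop)
  (hM : puiseux_monoid M) (hrc : root_closed M)
  (k l : nat) (g : 'I_k -> fm F) (h : 'I_l -> fm F)
  (hg : forall i, fm_irreducible M (g i)) (hh : forall j, fm_irreducible M (h j))
  (heq : fm_eq (fm_prod (map g (enum 'I_k))) (fm_prod (map h (enum 'I_l)))) :
  k = l /\ exists sigma : 'I_k -> 'I_l,
    bijective sigma /\ forall i, fm_associated M (g i) (h (sigma i)).
Proof.
pose ps := map g (enum 'I_k) ++ map h (enum 'I_l).
have gin i : g i \in ps by rewrite mem_cat map_f ?mem_enum.
have hin j : h j \in ps by rewrite mem_cat orbC map_f ?mem_enum.
have psirr p : p \in ps -> fm_irreducible M p.
  by rewrite mem_cat => /orP [] /mapP [i _ ->].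
have psM p t : p \in ps -> t \in p -> M t.1.
  by move=> /psirr [Mp _ _ _]; apply: Mp.
case Eps : ps => [|p0 ps'].
  have : size ps = 0%N by rewrite Eps.
  rewrite size_cat !size_map -!enumT !size_enum_ord => /eqP; rewrite addn_eq0 => /andP [/eqP k0 /eqP l0].
  subst k l; split=> //; exists id; split; [exact: injF_bij | by case].
have p0in : p0 \in ps by rewrite Eps inE eqxx.
have [t0 [t0p x0pos]] : exists t0, t0 \in p0 /\ 0 < t0.1.
  apply: NNPP => nex; apply: (L_const hM (p := p0)).
  - by move=> t tp; apply: psM tp.
  - move=> t tp; apply/eqP; rewrite eq_le (Mge0 hM (psM _ _ p0in tp)) andbT.
    by rewrite leNgt; apply/negP => tpos; apply: nex; exists t.
  - exact: psirr.
pose xs := [seq t.1 | t <- flatten ps].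
have txs p t : p \in ps -> t \in p -> t.1 \in xs.
  by move=> pp tp; apply: map_f; apply/flattenP; exists p.
have xs0 : forall x, x \in xs -> 0 <= x.
  by move=> x /mapP [t /flattenP [p pp tp] ->]; apply: (Mge0 hM); apply: psM tp.
have [D [D0 hD]] := common_den xs0.
have D0r : (D%:R : rat) != 0 by rewrite pnatr_eq0 -lt0n.
pose P n := (0 < n)%N /\ in_gp M (n%:R / D%:R).
have [m0 em0] := hD _ (txs _ _ p0in t0p).
have Pm0 : P m0.
  split; last by rewrite -em0; apply: gpM => //; apply: psM t0p.
  rewrite lt0n; apply/negP => /eqP m00; move: x0pos; by rewrite em0 m00 mul0r ltxx.
have [n0 [[n00 gn0] minn0]] := ex_min Pm0.
pose c := n0%:R / D%:R : rat.
have c0 : 0 < c by rewrite divr_gt0 ?ltr0n.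
have cover p : p \in ps -> cov c p.
  move=> pp t tp; have [m em] := hD _ (txs _ _ pp tp).
  exists (m %/ n0)%N.
  have em' : (m%:R : rat) = (m %/ n0 * n0 + m %% n0)%N%:R by rewrite -div.divn_eq.
  have r0 : (m %% n0 = 0%N)%N.
    apply/eqP; rewrite -leqn0 leqNgt; apply/negP => rpos.
    have : P (m %% n0)%N .
      split=> //.
      have -> : (m %% n0)%N%:R / D%:R = t.1 + - (c * (m %/ n0)%N%:R).
        rewrite em em' natrD natrM /c; field; exact: D0r.
      apply: gpD => //; first by apply: gpM => //; apply: psM tp.
      by apply: gpN; apply: gpMn.
    by move/minn0; rewrite leqNgt ltn_pmod.
  rewrite em em' r0 addn0 natrM /c; field; exact: D0r.
have [q0 eq0] := cover _ p0in _ t0p.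
have cM : M c.
  apply: hrc; split; first exact: gn0.
  exists q0; split.
    rewrite lt0n; apply/negP => /eqP q00; move: x0pos; by rewrite eq0 q00 mulr0 ltxx.
  by rewrite -mulr_natr -eq0; apply: psM t0p.
have Mc n : M (c * n%:R) by apply: MMn.
have cg i : cov c (g i) by apply: cover.
have ch j : cov c (h j) by apply: cover.
have ig i : irreducible_poly (phi c (g i)) by exact: (irr_transfer hM c0 Mc (cg i) (hg i)).
have ih j : irreducible_poly (phi c (h j)) by exact: (irr_transfer hM c0 Mc (ch j) (hh j)).
have ep : \prod_i phi c (g i) %= \prod_j phi c (h j).
  rewrite -!phi_prod_ord //.
  by rewrite (proj1 (phi_eq c0 (cov_prod_ord _ _ _ _ cg) (cov_prod_ord _ _ _ _ ch)) heq) eqpxx.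
have [kl [sigma [bs hs]]] := poly_ufd _ _ _ _ _ ig ih ep.
split=> //; exists sigma; split=> // i.
move: (hs i) => /eqpP [[c1 c2] /andP [/= c10 c20] E].
exists [:: (0, c2 / c1)]; split.
  have := @L_unit F M hM c c0 [:: (0, c2 / c1)] (c2 / c1).
  move=> /(_ (@cov_const F c _) (@inFM_const F M hM _) (phi_const c0 _)); apply.
  by rewrite mulf_neq0 ?invr_eq0.
apply/(phi_eq c0 (cg i)); first by apply: cov_mul => //; exact: cov_const.
rewrite phi_mul //; last exact: cov_const.
rewrite phi_const // mul_polyC -[phi c (g i)]scale1r -(mulVf c10) -scalerA E scalerA.
by rewrite mulrC.
Qed.
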